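(* For any c.e. transitive relation $\prec$ on $\omega$ there exists a computable partial order $\sqsubseteq$ on $\omega$ such that $\mathcal{I}(\prec)$ is computably homeomorphic to the subspace of non-principal ideals of $\mathcal{I}(\sqsubseteq)$.
   Context: For a transitive relation $\prec$ on a set $S$, an ideal is a set $I\subseteq S$ that is non-empty, a lower set ($b\prec a\in I$ implies $b\in I$), and directed (for all $a,b\in I$ there is $c\in I$ with $a\prec c$ and $b\prec c$). $\mathcal{I}(\prec)$ is the set of all ideals with the topology generated by the basic open sets $[n]_\prec=\{I\mid n\in I\}$, regarded as an effective space with these basic sets numbered by $n$; subspaces carry the induced numbering $n\mapsto[n]_\prec\cap Y$. An ideal of a partial order $\sqsubseteq$ is principal if it has a $\sqsubseteq$-largest element. A computable homeomorphism between effective spaces $(X,\beta),(Y,\gamma)$ is a homeomorphism $f$ such that both $f$ and $f^{-1}$ are computable, where $f$ is computable if $f^{-1}(\gamma(n))=\bigcup\beta(B_n)$ for a uniformly c.e. family $(B_n)$. *)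

(* Defs.v *)
From Stdlib Require Import List Arith.
Import ListNotations.

Inductive mrec : Type :=
| MZero : mrec
| MSucc : mrec
| MProj : nat -> mrec
| MComp : mrec -> list mrec -> mrec
| MPrec : mrec -> mrec -> mrec
| MMu   : mrec -> mrec.

Inductive eval : mrec -> list nat -> nat -> Prop :=
| ev_zero : forall xs, eval MZero xs 0
| ev_succ : forall xs, eval MSucc xs (S (nth 0 xs 0))
| ev_proj : forall i xs, eval (MProj i) xs (nth i xs 0)
| ev_comp : forall f gs xs ys z,
    evals gs xs ys -> eval f ys z -> eval (MComp f gs) xs z
| ev_prec0 : forall f g xs z, eval f xs z -> eval (MPrec f g) (0 :: xs) z
| ev_precS : forall f g n xs y z,
    eval (MPrec f g) (n :: xs) y -> eval g (n :: y :: xs) z ->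
    eval (MPrec f g) (S n :: xs) z
| ev_mu : forall f xs n,
    eval f (n :: xs) 0 ->
    (forall m, m < n -> exists k, eval f (m :: xs) (S k)) ->
    eval (MMu f) xs n
with evals : list mrec -> list nat -> list nat -> Prop :=
| evs_nil : forall xs, evals [] xs []
| evs_cons : forall g gs xs y ys,
    eval g xs y -> evals gs xs ys -> evals (g :: gs) xs (y :: ys).

Definition ce_rel (R : nat -> nat -> Prop) : Prop :=
  exists p : mrec, forall a b, R a b <-> exists y, eval p [a; b] y.

Definition computable_rel (R : nat -> nat -> Prop) : Prop :=
  exists p : mrec, forall a b,
    (R a b -> eval p [a; b] 1) /\ (~ R a b -> eval p [a; b] 0).

Definition transitive_rel (R : nat -> nat -> Prop) : Prop :=
  forall a b c, R a b -> R b c -> R a c.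

Definition partial_order (R : nat -> nat -> Prop) : Prop :=
  (forall a, R a a) /\
  (forall a b, R a b -> R b a -> a = b) /\
  transitive_rel R.

Definition is_ideal (R : nat -> nat -> Prop) (I : nat -> Prop) : Prop :=
  (exists a, I a) /\
  (forall a b, R b a -> I a -> I b) /\
  (forall a b, I a -> I b -> exists c, I c /\ R a c /\ R b c).

Definition principal (R : nat -> nat -> Prop) (I : nat -> Prop) : Prop :=
  exists a, I a /\ forall b, I b -> R b a.

Definition Ideals (R : nat -> nat -> Prop) : Type :=
  { I : nat -> Prop | is_ideal R I }.

Definition NPIdeals (R : nat -> nat -> Prop) : Type :=
  { I : nat -> Prop | is_ideal R I /\ ~ principal R I }.

(** Numberings of basic open sets: n |-> [n]_R (restricted to the subspace). *)
Definition ideal_basis (R : nat -> nat -> Prop) (n : nat) (I : Ideals R) : Prop :=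
  proj1_sig I n.

Definition npideal_basis (R : nat -> nat -> Prop) (n : nat) (I : NPIdeals R) : Prop :=
  proj1_sig I n.

Definition gen_open {X : Type} (beta : nat -> X -> Prop) (U : X -> Prop) : Prop :=
  forall x, U x -> exists ns : list nat,
    (forall n, In n ns -> beta n x) /\
    (forall y, (forall n, In n ns -> beta n y) -> U y).

Definition continuous_map {X Y : Type} (beta : nat -> X -> Prop)
  (gamma : nat -> Y -> Prop) (f : X -> Y) : Prop :=
  forall V, gen_open gamma V -> gen_open beta (fun x => V (f x)).

(** f is computable: f^{-1}(gamma n) = U_{m in B_n} beta m for a uniformly
    c.e. family (B_n) (encoded as the c.e. relation B n m :<-> m in B_n). *)
Definition computable_map {X Y : Type} (beta : nat -> X -> Prop)
  (gamma : nat -> Y -> Prop) (f : X -> Y) : Prop :=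
  exists B : nat -> nat -> Prop, ce_rel B /\
    forall n x, gamma n (f x) <-> exists m, B n m /\ beta m x.

Definition computably_homeomorphic {X Y : Type} (beta : nat -> X -> Prop)
  (gamma : nat -> Y -> Prop) : Prop :=
  exists (f : X -> Y) (g : Y -> X),
    (forall x, g (f x) = x) /\ (forall y, f (g y) = y) /\
    continuous_map beta gamma f /\ continuous_map gamma beta g /\
    computable_map beta gamma f /\ computable_map gamma beta g.

(* Main.v *)
Require Import Defs.
From Stdlib Require Import List Arith Lia PeanoNat Classical FunctionalExtensionality PropExtensionality ProofIrrelevance.
Import ListNotations.

Definition mrec_ind2 (P : mrec -> Prop) (H0 : P MZero) (H1 : P MSucc)
  (H2 : forall i, P (MProj i))
  (H3 : forall f gs, P f -> Forall P gs -> P (MComp f gs))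
  (H4 : forall f g, P f -> P g -> P (MPrec f g))
  (H5 : forall f, P f -> P (MMu f)) : forall f, P f :=
  fix F f := match f return P f with
  | MZero => H0 | MSucc => H1 | MProj i => H2 i
  | MComp f gs => H3 f gs (F f)
      ((fix G gs := match gs return Forall P gs with
        | [] => Forall_nil _ | g :: gs' => Forall_cons _ (F g) (G gs') end) gs)
  | MPrec f g => H4 f g (F f) (F g)
  | MMu f => H5 f (F f) end.

Definition enc (o : option nat) : nat := match o with Some y => S y | None => 0 end.

Fixpoint precloop (F G : list nat -> option nat) (xs : list nat) (k : nat) : option nat :=
  match k with 0 => F xs | S k' => match precloop F G xs k' with Some y => G (k' :: y :: xs) | None => None end end.

Fixpoint musearch (F : list nat -> option nat) (xs : list nat) (fuel m : nat) : option nat :=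
  match fuel with 0 => None | S fu => match F (m :: xs) with Some 0 => Some m | Some (S _) => musearch F xs fu (S m) | None => None end end.

Fixpoint run (f : mrec) (t : nat) (xs : list nat) {struct f} : option nat :=
  match f with
  | MZero => Some 0
  | MSucc => Some (S (nth 0 xs 0))
  | MProj i => Some (nth i xs 0)
  | MComp h gs =>
      let fix runs (gs : list mrec) : option (list nat) :=
        match gs with
        | [] => Some []
        | g :: gs' => match run g t xs with
                      | Some y => match runs gs' with Some ys => Some (y :: ys) | None => None end
                      | None => None end
        end in
      match runs gs with Some ys => run h t ys | None => None end
  | MPrec f1 g1 => match xs with [] => None | x :: xs' => precloop (run f1 t) (run g1 t) xs' x end
  | MMu f1 => musearch (run f1 t) xs t 0
  end.

Fixpoint runs (gs : list mrec) t xs : option (list nat) :=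
  match gs with [] => Some []
  | g :: gs' => match run g t xs with
                | Some y => match runs gs' t xs with Some ys => Some (y :: ys) | None => None end
                | None => None end end.

Lemma run_comp h gs t xs : run (MComp h gs) t xs =
  match runs gs t xs with Some ys => run h t ys | None => None end.
Proof.
  simpl. replace (runs gs t xs) with
   ((fix runs (gs : list mrec) : option (list nat) :=
        match gs with
        | [] => Some []
        | g :: gs' => match run g t xs with
                      | Some y => match runs gs' with Some ys => Some (y :: ys) | None => None end
                      | None => None end
        end) gs); [reflexivity|].
  induction gs; simpl; auto. rewrite IHgs. reflexivity.
Qed.

Definition ext (F F' : list nat -> option nat) := forall l y, F l = Some y -> F' l = Some y.

Lemma precloop_mono F G F' G' xs k y : ext F F' -> ext G G' ->
  precloop F G xs k = Some y -> precloop F' G' xs k = Some y.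
Proof.
  intros HF HG. revert y; induction k; simpl; intros y H; auto.
  destruct (precloop F G xs k) eqn:E; [|discriminate].
  rewrite (IHk n eq_refl). auto.
Qed.

Lemma musearch_mono F F' xs u u' m y : ext F F' -> u <= u' ->
  musearch F xs u m = Some y -> musearch F' xs u' m = Some y.
Proof.
  intros HF. revert u' m; induction u; simpl; intros u' m Hu H; [discriminate|].
  destruct u' as [|u']; [lia|]. simpl.
  destruct (F (m :: xs)) as [[|z]|] eqn:E; try discriminate.
  - rewrite (HF _ _ E). auto.
  - rewrite (HF _ _ E). apply IHu; auto; lia.
Qed.

Lemma run_mono f : forall t t' xs y, t <= t' -> run f t xs = Some y -> run f t' xs = Some y.
Proof.
  induction f as [| |i|h gs IHh IHgs|f1 f2 IH1 IH2|f1 IH1] using mrec_ind2;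
    intros t t' xs y Ht Hr; auto.
  - rewrite run_comp in *.
    assert (Hrs : forall ys, runs gs t xs = Some ys -> runs gs t' xs = Some ys).
    { clear Hr. induction IHgs as [|g gs' Hg Hgs IH]; simpl; auto.
      intros ys. destruct (run g t xs) eqn:E1; [|discriminate].
      rewrite (Hg _ _ _ _ Ht E1).
      destruct (runs gs' t xs) eqn:E2; [|discriminate].
      rewrite (IH _ eq_refl). auto. }
    destruct (runs gs t xs) eqn:E; [|discriminate].
    rewrite (Hrs _ eq_refl). eauto.
  - simpl in *. destruct xs; [discriminate|].
    eapply precloop_mono; [| |exact Hr]; intros l z; eauto.
  - simpl in *. eapply musearch_mono; [|exact Ht|exact Hr]. intros l z; eauto.
Qed.

Lemma run_sound f : forall t xs y, run f t xs = Some y -> eval f xs y.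
Proof.
  induction f as [| |i|h gs IHh IHgs|f1 f2 IH1 IH2|f1 IH1] using mrec_ind2;
    intros t xs y Hr.
  - inversion Hr; constructor.
  - inversion Hr; constructor.
  - inversion Hr; constructor.
  - rewrite run_comp in Hr.
    destruct (runs gs t xs) eqn:E; [|discriminate].
    apply ev_comp with (ys := l); [|eauto].
    clear Hr. revert l E. induction IHgs as [|g gs' Hg Hgs IH]; simpl; intros l E.
    + inversion E; constructor.
    + destruct (run g t xs) eqn:E1; [|discriminate].
      destruct (runs gs' t xs) eqn:E2; [|discriminate].
      inversion E; subst. constructor; eauto.
  - simpl in Hr. destruct xs as [|x xs]; [discriminate|].
    revert y Hr. induction x; simpl; intros y Hr.
    + constructor. eauto.
    + destruct (precloop (run f1 t) (run f2 t) xs x) eqn:E; [|discriminate].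
      eapply ev_precS; eauto.
  - simpl in Hr.
    assert (Hg : forall u m, (forall j, j < m -> exists k, eval f1 (j :: xs) (S k)) ->
             musearch (run f1 t) xs u m = Some y -> eval (MMu f1) xs y).
    { induction u; simpl; intros m Hm Hs; [discriminate|].
      destruct (run f1 t (m :: xs)) as [[|z]|] eqn:E; try discriminate.
      - inversion Hs; subst. constructor; eauto.
      - apply (IHu (S m)); auto. intros j Hj.
        destruct (Nat.eq_dec j m); [subst; eauto|]. apply Hm; lia. }
    apply (Hg t 0); auto. intros; lia.
Qed.

Lemma uniform_bound (P : nat -> nat -> Prop) n :
  (forall j t t', P j t -> t <= t' -> P j t') ->
  (forall j, j < n -> exists t, P j t) -> exists T, forall j, j < n -> P j T.
Proof.
  intros Hm. induction n; intros H.
  - exists 0; intros; lia.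
  - destruct IHn as [T1 HT1]. { intros; apply H; lia. }
    destruct (H n) as [T2 HT2]; [lia|].
    exists (max T1 T2). intros j Hj.
    destruct (Nat.eq_dec j n); subst.
    + eapply Hm; [exact HT2|lia].
    + eapply Hm; [apply HT1; lia|lia].
Qed.

Lemma musearch_found F xs d : forall m u n, m + d = n ->
  (forall i, m <= i -> i < n -> exists k, F (i :: xs) = Some (S k)) ->
  F (n :: xs) = Some 0 -> d < u -> musearch F xs u m = Some n.
Proof.
  induction d; intros m u n Hn Hi Hz Hu; destruct u as [|u]; try lia; simpl.
  - replace m with n by lia. rewrite Hz. auto.
  - destruct (Hi m) as [k Hk]; try lia. rewrite Hk.
    apply IHd; auto; try lia. intros i H1 H2. apply Hi; lia.
Qed.

Lemma inv_comp h gs xs y : eval (MComp h gs) xs y -> exists ys, evals gs xs ys /\ eval h ys y.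
Proof. intros H; inversion H; subst; eauto. Qed.
Lemma inv_prec0 f g xs z : eval (MPrec f g) (0 :: xs) z -> eval f xs z.
Proof. intros H; inversion H; subst; auto. Qed.
Lemma inv_precS f g n xs z : eval (MPrec f g) (S n :: xs) z ->
  exists y, eval (MPrec f g) (n :: xs) y /\ eval g (n :: y :: xs) z.
Proof. intros H; inversion H; subst; eauto. Qed.
Lemma inv_prec_nil f g z : eval (MPrec f g) [] z -> False.
Proof. intros H; inversion H. Qed.
Lemma inv_mu f xs n : eval (MMu f) xs n ->
  eval f (n :: xs) 0 /\ (forall m, m < n -> exists k, eval f (m :: xs) (S k)).
Proof. intros H; inversion H; subst; auto. Qed.
Lemma inv_evals_nil xs ys : evals [] xs ys -> ys = [].
Proof. intros H; inversion H; auto. Qed.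
Lemma inv_evals_cons g gs xs ys : evals (g :: gs) xs ys ->
  exists y ys', ys = y :: ys' /\ eval g xs y /\ evals gs xs ys'.
Proof. intros H; inversion H; subst; eauto. Qed.

Lemma runs_mono gs : Forall (fun g => forall t t' xs y, t <= t' -> run g t xs = Some y -> run g t' xs = Some y) gs ->
  forall t t' xs ys, t <= t' -> runs gs t xs = Some ys -> runs gs t' xs = Some ys.
Proof.
  induction 1 as [|g1 gs1 Hg1 Hgs1 IH1]; simpl; auto.
  intros t t' xs ys Htt. destruct (run g1 t xs) eqn:E1; [|discriminate].
  rewrite (Hg1 _ _ _ _ Htt E1).
  destruct (runs gs1 t xs) eqn:E2; [|discriminate].
  rewrite (IH1 _ _ _ _ Htt E2). auto.
Qed.

Lemma run_complete f : forall xs y, eval f xs y -> exists t, run f t xs = Some y.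
Proof.
  induction f as [| |i|h gs IHh IHgs|f1 f2 IH1 IH2|f1 IH1] using mrec_ind2;
    intros xs y He.
  - inversion He; subst; exists 0; reflexivity.
  - inversion He; subst; exists 0; reflexivity.
  - inversion He; subst; exists 0; reflexivity.
  - destruct (inv_comp _ _ _ _ He) as [ys [Hes Hh]].
    assert (Hmono : Forall (fun g => forall t t' xs y, t <= t' -> run g t xs = Some y -> run g t' xs = Some y) gs).
    { clear. induction gs; constructor; auto. intros; eapply run_mono; eauto. }
    assert (Hrs : forall ys, evals gs xs ys -> exists t, runs gs t xs = Some ys).
    { clear He Hes Hh Hmono. induction IHgs as [|g gs' Hg Hgs IH]; intros ys0 Hes.
      - rewrite (inv_evals_nil _ _ Hes). exists 0; reflexivity.
      - destruct (inv_evals_cons _ _ _ _ Hes) as [y0 [ys1 [-> [E1 E2]]]].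
        destruct (Hg _ _ E1) as [t1 Ht1]. destruct (IH _ E2) as [t2 Ht2].
        exists (max t1 t2). simpl.
        rewrite (run_mono _ t1 (max t1 t2) _ _ ltac:(lia) Ht1).
        assert (Hm : Forall (fun g => forall t t' xs y, t <= t' -> run g t xs = Some y -> run g t' xs = Some y) gs').
        { clear. induction gs'; constructor; auto. intros; eapply run_mono; eauto. }
        rewrite (runs_mono _ Hm t2 (max t1 t2) xs ys1); auto; lia. }
    destruct (Hrs _ Hes) as [t1 Ht1]. destruct (IHh _ _ Hh) as [t2 Ht2].
    exists (max t1 t2). rewrite run_comp.
    rewrite (runs_mono _ Hmono t1 (max t1 t2) xs ys); [|lia|auto].
    eapply run_mono; [|exact Ht2]; lia.
  - assert (Hp : forall x xs' z, eval (MPrec f1 f2) (x :: xs') z ->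
              exists t, precloop (run f1 t) (run f2 t) xs' x = Some z).
    { induction x; intros xs' z Hz; simpl.
      - apply IH1. apply inv_prec0 in Hz; auto.
      - destruct (inv_precS _ _ _ _ _ Hz) as [y0 [A B]].
        destruct (IHx _ _ A) as [t1 Ht1]. destruct (IH2 _ _ B) as [t2 Ht2].
        exists (max t1 t2).
        rewrite (precloop_mono (run f1 t1) (run f2 t1) (run f1 (max t1 t2)) (run f2 (max t1 t2)) xs' x y0);
          auto; try (intros l w; apply run_mono; lia).
        eapply run_mono; [|exact Ht2]; lia. }
    destruct xs as [|x xs]; [destruct (inv_prec_nil _ _ _ He)|].
    destruct (Hp x xs y He) as [t Ht]. exists t; exact Ht.
  - destruct (inv_mu _ _ _ He) as [H1 H3].
    destruct (IH1 _ _ H1) as [t0 Ht0].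
    destruct (uniform_bound (fun j t => exists k, run f1 t (j :: xs) = Some (S k)) y) as [T HT].
    { intros j t t' [k Hk] Htt. exists k. eapply run_mono; eauto. }
    { intros j Hj. destruct (H3 j Hj) as [k Hk]. destruct (IH1 _ _ Hk) as [t Ht]. eauto. }
    exists (max (max t0 T) (S y)). simpl.
    apply musearch_found with (d := y); try lia.
    + intros i _ Hi. destruct (HT i Hi) as [k Hk]. exists k. eapply run_mono; [|exact Hk]; lia.
    + eapply run_mono; [|exact Ht0]; lia.
Qed.

Lemma eval_det f : forall xs y1 y2, eval f xs y1 -> eval f xs y2 -> y1 = y2.
Proof.
  induction f as [| |i|h gs IHh IHgs|f1 f2 IH1 IH2|f1 IH1] using mrec_ind2;
    intros xs y1 y2 E1 E2.
  - inversion E1; inversion E2; subst; auto.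
  - inversion E1; inversion E2; subst; auto.
  - inversion E1; inversion E2; subst; auto.
  - destruct (inv_comp _ _ _ _ E1) as [ys [A1 B1]].
    destruct (inv_comp _ _ _ _ E2) as [ys' [A2 B2]].
    assert (ys = ys').
    { clear -IHgs A1 A2. revert ys ys' A1 A2.
      induction IHgs as [|g gs' Hg Hgs IH]; intros ys ys' A B.
      - rewrite (inv_evals_nil _ _ A), (inv_evals_nil _ _ B); auto.
      - destruct (inv_evals_cons _ _ _ _ A) as [a [l [-> [C D]]]].
        destruct (inv_evals_cons _ _ _ _ B) as [a' [l' [-> [C' D']]]].
        f_equal; eauto. }
    subst; eauto.
  - destruct xs as [|x xs]; [destruct (inv_prec_nil _ _ _ E1)|].
    revert y1 y2 E1 E2. induction x; intros y1 y2 E1 E2.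
    + apply inv_prec0 in E1; apply inv_prec0 in E2; eauto.
    + destruct (inv_precS _ _ _ _ _ E1) as [a [A B]].
      destruct (inv_precS _ _ _ _ _ E2) as [a' [A' B']].
      assert (a = a') by eauto. subst. eauto.
  - destruct (inv_mu _ _ _ E1) as [A B]. destruct (inv_mu _ _ _ E2) as [A' B'].
    destruct (Nat.lt_trichotomy y1 y2) as [H|[H|H]]; auto.
    + destruct (B' _ H) as [k Hk]. specialize (IH1 _ _ _ A Hk). discriminate.
    + destruct (B _ H) as [k Hk]. specialize (IH1 _ _ _ A' Hk). discriminate.
Qed.

Definition ifz (x a b : nat) : nat := match x with 0 => a | S _ => b end.

Definition ONE := MComp MSucc [MZero].
Definition PRED := MPrec MZero (MProj 0).
Definition IFZ := MPrec (MProj 0) (MProj 3).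
Definition SUBP := MPrec (MProj 0) (MComp PRED [MProj 1]).

Definition Ifz x a b := MComp IFZ [x; a; b].
Definition Pred x := MComp PRED [x].
Definition Succ x := MComp MSucc [x].
Definition Sub x y := MComp SUBP [y; x].
Definition projs s n := map MProj (seq s n).

Lemma ONE_ev l : eval ONE l 1.
Proof. eapply ev_comp; [repeat constructor|]. apply ev_succ. Qed.

Lemma PRED_ev x r : eval PRED (x :: r) (pred x).
Proof.
  induction x.
  - constructor. constructor.
  - eapply ev_precS; [exact IHx|]. apply (ev_proj 0).
Qed.

Lemma IFZ_tot x a b : exists y, eval IFZ [x; a; b] y.
Proof.
  induction x.
  - eexists. constructor. apply (ev_proj 0).
  - destruct IHx as [y Hy]. eexists. eapply ev_precS; [exact Hy|]. apply (ev_proj 3).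
Qed.

Lemma IFZ_ev x a b : eval IFZ [x; a; b] (ifz x a b).
Proof.
  destruct x; simpl.
  - constructor. apply (ev_proj 0).
  - destruct (IFZ_tot x a b) as [y Hy].
    eapply ev_precS; [exact Hy|]. apply (ev_proj 3).
Qed.

Lemma SUBP_ev m n r : eval SUBP (m :: n :: r) (n - m).
Proof.
  induction m.
  - constructor. replace (n - 0) with n by lia. apply (ev_proj 0).
  - eapply ev_precS; [exact IHm|].
    replace (n - S m) with (pred (n - m)) by lia.
    eapply ev_comp; [repeat constructor|]. simpl. apply PRED_ev.
Qed.

Lemma ev_eq f l v v' : eval f l v -> v = v' -> eval f l v'.
Proof. intros; subst; auto. Qed.

Lemma Ifz_ev x a b l vx va vb : eval x l vx -> eval a l va -> eval b l vb ->
  eval (Ifz x a b) l (ifz vx va vb).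
Proof. intros. eapply ev_comp; [repeat constructor; eauto|]. apply IFZ_ev. Qed.
Lemma Pred_ev x l v : eval x l v -> eval (Pred x) l (pred v).
Proof. intros. eapply ev_comp; [repeat constructor; eauto|]. apply PRED_ev. Qed.
Lemma Succ_ev x l v : eval x l v -> eval (Succ x) l (S v).
Proof. intros. eapply ev_comp; [repeat constructor; eauto|]. apply ev_succ. Qed.
Lemma Sub_ev x y l vx vy : eval x l vx -> eval y l vy -> eval (Sub x y) l (vx - vy).
Proof. intros. eapply ev_comp; [repeat constructor; eauto|]. apply SUBP_ev. Qed.
Lemma P_ev i l : eval (MProj i) l (nth i l 0).
Proof. constructor. Qed.

Lemma projs_ev pre l : evals (projs (length pre) (length l)) (pre ++ l) l.
Proof.
  revert pre; induction l; intros pre; simpl.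
  - constructor.
  - constructor.
    + apply ev_eq with (nth (length pre) (pre ++ a :: l) 0); [constructor|].
      rewrite nth_middle. auto.
    + replace (pre ++ a :: l) with ((pre ++ [a]) ++ l) by (rewrite <- app_assoc; auto).
      replace (S (length pre)) with (length (pre ++ [a])) by (rewrite length_app; simpl; lia).
      apply IHl.
Qed.

Lemma projs_ev' k n pre l : length pre = k -> length l = n -> evals (projs k n) (pre ++ l) l.
Proof. intros; subst; apply projs_ev. Qed.

Definition allnz (cs : list mrec) : mrec := fold_right (fun c acc => Ifz c MZero acc) ONE cs.
Definition predall (cs : list mrec) := map (fun c => Pred c) cs.
Definition allv (vs : list nat) : nat := fold_right (fun v acc => ifz v 0 acc) 1 vs.

Lemma allnz_ev cs vs l : Forall2 (fun c v => eval c l v) cs vs -> eval (allnz cs) l (allv vs).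
Proof.
  induction 1; simpl. apply ONE_ev. apply Ifz_ev; auto. constructor.
Qed.
Lemma predall_ev cs vs l : Forall2 (fun c v => eval c l v) cs vs -> evals (predall cs) l (map pred vs).
Proof. induction 1; simpl; constructor; auto. apply Pred_ev; auto. Qed.

Fixpoint comp (f : mrec) (n : nat) {struct f} : mrec :=
  match f with
  | MZero => ONE
  | MSucc => Succ (Succ (MProj 1))
  | MProj i => Succ (MProj (S i))
  | MComp h gs =>
     let fix comps (gs : list mrec) : list mrec :=
       match gs with [] => [] | g :: gs' => comp g n :: comps gs' end in
     Ifz (allnz (comps gs)) MZero (MComp (comp h (length gs)) (MProj 0 :: predall (comps gs)))
  | MPrec f1 g1 => match n with
     | 0 => MZero
     | S n' => MComp (MPrec (comp f1 n')
                 (Ifz (MProj 1) MZero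
                    (MComp (comp g1 (S (S n'))) (MProj 2 :: MProj 0 :: Pred (MProj 1) :: projs 3 n'))))
               (MProj 1 :: MProj 0 :: projs 2 n')
     end
  | MMu f1 =>
     let V := MComp (comp f1 (S n)) (MProj 2 :: MProj 0 :: projs 3 n) in
     let INNER := Ifz V MZero (Ifz (Pred V) (Succ (Succ (MProj 0))) ONE) in
     Pred (MComp (MPrec ONE (Ifz (Pred (MProj 1)) (Ifz (MProj 1) MZero INNER) (MProj 1)))
                 (MProj 0 :: MProj 0 :: projs 1 n))
  end.

Lemma comps_eq n gs : (fix comps (gs : list mrec) : list mrec :=
       match gs with [] => [] | g :: gs' => comp g n :: comps gs' end) gs = map (fun g => comp g n) gs.
Proof. induction gs; simpl; auto. Qed.

Definition innerv (F : list nat -> option nat) xs m :=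
  let v := enc (F (m :: xs)) in ifz v 0 (ifz (pred v) (S (S m)) 1).
Fixpoint stv (F : list nat -> option nat) xs j :=
  match j with 0 => 1 | S j' => let s := stv F xs j' in ifz (pred s) (ifz s 0 (innerv F xs j')) s end.

Lemma stv_S F xs j : stv F xs (S j) = ifz (pred (stv F xs j)) (ifz (stv F xs j) 0 (innerv F xs j)) (stv F xs j).
Proof. reflexivity. Qed.

Lemma stv_stable F xs m j : stv F xs m <> 1 -> stv F xs (m + j) = stv F xs m.
Proof.
  intros H. induction j. rewrite Nat.add_0_r; auto.
  rewrite Nat.add_succ_r, stv_S, IHj.
  destruct (stv F xs m) as [|[|s]]; simpl; auto. lia.
Qed.

Lemma stv_search F xs u : forall m, stv F xs m = 1 -> pred (stv F xs (m + u)) = enc (musearch F xs u m).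
Proof.
  induction u; intros m H.
  - rewrite Nat.add_0_r, H. reflexivity.
  - assert (E : stv F xs (S m) = innerv F xs m).
    { rewrite stv_S, H. reflexivity. }
    cbn [musearch]. rewrite <- Nat.add_succ_comm.
    unfold innerv in E.
    destruct (F (m :: xs)) as [[|z]|] eqn:EF; cbn [enc ifz Nat.pred] in E.
    + rewrite stv_stable; rewrite E; auto.
    + apply IHu. auto.
    + rewrite stv_stable; rewrite E; auto.
Qed.

Lemma runs_vals gs t xs :
  (forall ys, runs gs t xs = Some ys ->
     allv (map (fun g => enc (run g t xs)) gs) = 1 /\ map pred (map (fun g => enc (run g t xs)) gs) = ys) /\
  (runs gs t xs = None -> allv (map (fun g => enc (run g t xs)) gs) = 0).
Proof.
  induction gs as [|g gs IH]; simpl.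
  - split; intros; [inversion H; auto|discriminate].
  - destruct IH as [IH1 IH2].
    destruct (run g t xs) eqn:E; simpl.
    + destruct (runs gs t xs) eqn:E2.
      * destruct (IH1 _ eq_refl) as [A B]. split; [|discriminate].
        intros ys Hy. inversion Hy. rewrite A. simpl. split; auto. f_equal. auto.
      * split; intros; [discriminate|]. apply IH2; auto.
    + split; intros; [discriminate|auto].
Qed.

Theorem comp_ok f : forall n t xs, length xs = n -> eval (comp f n) (t :: xs) (enc (run f t xs)).
Proof.
  induction f as [| |i|h gs IHh IHgs|f1 f2 IH1 IH2|f1 IH1] using mrec_ind2;
    intros n t xs Hl.
  - apply ONE_ev.
  - simpl. apply Succ_ev, Succ_ev. apply (ev_proj 1).
  - simpl. apply Succ_ev. apply (ev_proj (S i)).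
  - cbn [comp]. rewrite comps_eq.
    set (vals := map (fun g => enc (run g t xs)) gs).
    assert (HF : Forall2 (fun c v => eval c (t :: xs) v) (map (fun g => comp g n) gs) vals).
    { unfold vals. clear -IHgs Hl. induction IHgs; simpl; constructor; auto. }
    eapply ev_eq.
    + apply Ifz_ev; [apply allnz_ev; exact HF|constructor|].
      eapply ev_comp.
      * constructor; [apply (ev_proj 0)|]. apply predall_ev. exact HF.
      * apply IHh. unfold vals. rewrite !length_map. reflexivity.
    + rewrite run_comp. destruct (runs_vals gs t xs) as [A B].
      destruct (runs gs t xs) eqn:E.
      * destruct (A _ eq_refl) as [A1 A2]. fold vals in A1, A2. rewrite A1. simpl.
        rewrite A2. reflexivity.
      * fold vals in B. rewrite B; auto.
  - destruct n as [|n'].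
    + destruct xs; [|discriminate]. constructor.
    + destruct xs as [|x xs']; [discriminate|]. simpl in Hl. injection Hl as Hl.
      cbn [comp].
      eapply ev_comp.
      * constructor; [apply (ev_proj 1)|]. constructor; [apply (ev_proj 0)|].
        change (t :: x :: xs') with ([t; x] ++ xs'). apply projs_ev'; auto.
      * simpl. induction x.
        -- constructor. apply IH1; auto.
        -- eapply ev_precS; [exact IHx|].
           eapply ev_eq.
           ++ apply Ifz_ev; [apply (ev_proj 1)|constructor|].
              eapply ev_comp.
              ** constructor; [apply (ev_proj 2)|]. constructor; [apply (ev_proj 0)|].
                 constructor; [apply Pred_ev, (ev_proj 1)|].
                 change (x :: enc (precloop (run f1 t) (run f2 t) xs' x) :: t :: xs')
                   with ([x; enc (precloop (run f1 t) (run f2 t) xs' x); t] ++ xs').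
                 apply projs_ev'; auto.
              ** apply IH2. simpl. lia.
           ++ simpl. destruct (precloop (run f1 t) (run f2 t) xs' x); reflexivity.
  - cbn [comp].
    set (STM := Ifz (Pred (MProj 1)) (Ifz (MProj 1) MZero
           (Ifz (MComp (comp f1 (S n)) (MProj 2 :: MProj 0 :: projs 3 n)) MZero
              (Ifz (Pred (MComp (comp f1 (S n)) (MProj 2 :: MProj 0 :: projs 3 n)))
                 (Succ (Succ (MProj 0))) ONE))) (MProj 1)).
    assert (HL : forall j, eval (MPrec ONE STM) (j :: t :: xs) (stv (run f1 t) xs j)).
    { induction j.
      - constructor. apply ONE_ev.
      - eapply ev_precS; [exact IHj|].
        assert (HV : eval (MComp (comp f1 (S n)) (MProj 2 :: MProj 0 :: projs 3 n))
                      (j :: stv (run f1 t) xs j :: t :: xs) (enc (run f1 t (j :: xs)))).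
        { eapply ev_comp.
          - constructor; [apply (ev_proj 2)|]. constructor; [apply (ev_proj 0)|].
            change (j :: stv (run f1 t) xs j :: t :: xs) with ([j; stv (run f1 t) xs j; t] ++ xs).
            apply projs_ev'; auto.
          - apply IH1. simpl; lia. }
        eapply ev_eq.
        + unfold STM. apply Ifz_ev; [apply Pred_ev, (ev_proj 1)| |apply (ev_proj 1)].
          apply Ifz_ev; [apply (ev_proj 1)|constructor|].
          apply Ifz_ev; [exact HV|constructor|].
          apply Ifz_ev; [apply Pred_ev; exact HV| |apply ONE_ev].
          apply Succ_ev, Succ_ev, (ev_proj 0).
        + rewrite stv_S. reflexivity. }
    eapply ev_eq.
    + apply Pred_ev. eapply ev_comp; [|apply (HL t)].
      constructor; [apply (ev_proj 0)|]. constructor; [apply (ev_proj 0)|].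
      change (t :: xs) with ([t] ++ xs). apply projs_ev'; auto.
    + simpl. apply (stv_search (run f1 t) xs t 0). reflexivity.
Qed.

Fixpoint fcd (n : nat) : nat := match n with 0 => 0 | S k => ifz (fcd k) (S k) (pred (fcd k)) end.

Definition Tr (Q : nat -> nat -> nat -> Prop) k u :=
  forall a b c, a <= k -> b <= k -> c <= k -> Q u a b -> Q u b c -> Q u a c.
Definition strict (Q : nat -> nat -> nat -> Prop) m n :=
  m < n /\ Tr Q m n /\ Tr Q (fcd n) n /\ Q n (fcd m) (fcd n).

Definition Qr p u a c := run p u [a; c] <> None.
Definition qv p u a c := enc (run p u [a; c]).

Definition FCD := MPrec MZero (Ifz (MProj 1) (Succ (MProj 0)) (Pred (MProj 1))).
Lemma FCD_ev n r : eval FCD (n :: r) (fcd n).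
Proof.
  induction n.
  - constructor; constructor.
  - eapply ev_precS; [exact IHn|]. simpl.
    apply Ifz_ev; [apply (ev_proj 1)|apply Succ_ev, (ev_proj 0)|apply Pred_ev, (ev_proj 1)].
Qed.

Definition BALL (n : nat) (Pp : mrec) :=
  MPrec (MComp Pp (MZero :: projs 0 n)) (Ifz (MProj 1) MZero (MComp Pp (Succ (MProj 0) :: projs 2 n))).
Fixpoint ballv (b : nat -> nat) k := match k with 0 => b 0 | S k' => ifz (ballv b k') 0 (b (S k')) end.

Lemma BALL_ev n Pp ps b k : length ps = n -> (forall j, eval Pp (j :: ps) (b j)) ->
  eval (BALL n Pp) (k :: ps) (ballv b k).
Proof.
  intros Hl Hb. induction k.
  - constructor. eapply ev_comp; [|apply Hb]. constructor; [constructor|].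
    apply (projs_ev' 0 n [] ps); auto.
  - eapply ev_precS; [exact IHk|]. simpl.
    apply Ifz_ev; [apply (ev_proj 1)|constructor|].
    eapply ev_comp; [|apply Hb]. constructor; [apply Succ_ev, (ev_proj 0)|].
    change (k :: ballv b k :: ps) with ([k; ballv b k] ++ ps). apply projs_ev'; auto.
Qed.

Lemma ballv_spec b k : ballv b k <> 0 <-> forall j, j <= k -> b j <> 0.
Proof.
  induction k; simpl.
  - split; [intros H j Hj; replace j with 0 by lia; auto|intros H; apply H; lia].
  - destruct (ballv b k) eqn:E; simpl.
    + split; [lia|]. intros H. exfalso. apply (proj2 IHk); [intros j Hj; apply H; lia|reflexivity].
    + split.
      * intros H j Hj. destruct (Nat.eq_dec j (S k)); [subst; auto|].
        apply IHk; [lia|lia].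
      * intros H. apply H; lia.
Qed.

Definition QP p := comp p 2.
Lemma QP_ev p u a c : eval (QP p) [u; a; c] (qv p u a c).
Proof. apply comp_ok. reflexivity. Qed.

Lemma qv_spec p u a c : qv p u a c <> 0 <-> Qr p u a c.
Proof. unfold qv, Qr. destruct (run p u [a; c]); simpl; split; congruence. Qed.

Definition Body3 p := Ifz (MComp (QP p) [MProj 4; MProj 2; MProj 1]) ONE
   (Ifz (MComp (QP p) [MProj 4; MProj 1; MProj 0]) ONE (MComp (QP p) [MProj 4; MProj 2; MProj 0])).
Definition body3v p c b a u := ifz (qv p u a b) 1 (ifz (qv p u b c) 1 (qv p u a c)).
Definition Body2 p := MComp (BALL 4 (Body3 p)) [MProj 2; MProj 0; MProj 1; MProj 2; MProj 3].
Definition Body1 p := MComp (BALL 3 (Body2 p)) [MProj 1; MProj 0; MProj 1; MProj 2].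
Definition TRP p := MComp (BALL 2 (Body1 p)) [MProj 0; MProj 0; MProj 1].
Definition trv p k u := ballv (fun a => ballv (fun b => ballv (fun c => body3v p c b a u) k) k) k.

Lemma QPc_ev p l i j k' : eval (MComp (QP p) [MProj i; MProj j; MProj k']) l
   (qv p (nth i l 0) (nth j l 0) (nth k' l 0)).
Proof. eapply ev_comp; [repeat constructor|apply QP_ev]. Qed.

Lemma TRP_ev p k u : eval (TRP p) [k; u] (trv p k u).
Proof.
  eapply ev_comp; [repeat constructor|]. simpl.
  apply BALL_ev; [reflexivity|]. intros a.
  eapply ev_comp; [repeat constructor|]. simpl.
  apply BALL_ev; [reflexivity|]. intros b.
  eapply ev_comp; [repeat constructor|]. simpl.
  apply BALL_ev; [reflexivity|]. intros c.
  unfold Body3, body3v.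
  apply Ifz_ev; [apply QPc_ev|apply ONE_ev|].
  apply Ifz_ev; [apply QPc_ev|apply ONE_ev|apply QPc_ev].
Qed.

Lemma trv_spec p k u : trv p k u <> 0 <-> Tr (Qr p) k u.
Proof.
  unfold trv, Tr. rewrite ballv_spec. split.
  - intros H a b c Ha Hb Hc H1 H2.
    specialize (H a Ha). rewrite ballv_spec in H. specialize (H b Hb).
    rewrite ballv_spec in H. specialize (H c Hc). unfold body3v in H.
    rewrite <- qv_spec in *.
    destruct (qv p u a b); [congruence|]. destruct (qv p u b c); [congruence|]. simpl in H. auto.
  - intros H a Ha. rewrite ballv_spec. intros b Hb. rewrite ballv_spec. intros c Hc.
    unfold body3v. specialize (H a b c Ha Hb Hc). rewrite <- !qv_spec in H.
    destruct (qv p u a b); simpl; [lia|]. destruct (qv p u b c); simpl; [lia|]. apply H; lia.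
Qed.

Definition And x y := Ifz x MZero y.
Definition Lt x y := Ifz (Sub y x) MZero ONE.
Definition Eqt x y := Ifz (Sub x y) (Ifz (Sub y x) ONE MZero) MZero.
Definition eqv a b := ifz (a - b) (ifz (b - a) 1 0) 0.
Lemma eqv_spec a b : eqv a b = if Nat.eq_dec a b then 1 else 0.
Proof.
  unfold eqv. destruct (Nat.eq_dec a b).
  - subst. rewrite Nat.sub_diag. reflexivity.
  - destruct (a - b) eqn:E1; simpl; auto. destruct (b - a) eqn:E2; simpl; auto. lia.
Qed.

Lemma And_ev x y l vx vy : eval x l vx -> eval y l vy -> eval (And x y) l (ifz vx 0 vy).
Proof. intros; apply Ifz_ev; auto; constructor. Qed.
Lemma Lt_ev x y l vx vy : eval x l vx -> eval y l vy -> eval (Lt x y) l (ifz (vy - vx) 0 1).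
Proof. intros; apply Ifz_ev; [apply Sub_ev; auto|constructor|apply ONE_ev]. Qed.
Lemma Eqt_ev x y l vx vy : eval x l vx -> eval y l vy -> eval (Eqt x y) l (eqv vx vy).
Proof.
  intros; apply Ifz_ev; [apply Sub_ev; auto| |constructor].
  apply Ifz_ev; [apply Sub_ev; auto|apply ONE_ev|constructor].
Qed.

Definition STRICTP p :=
  And (Lt (MProj 0) (MProj 1))
   (And (MComp (TRP p) [MProj 0; MProj 1])
     (And (MComp (TRP p) [MComp FCD [MProj 1]; MProj 1])
       (MComp (QP p) [MProj 1; MComp FCD [MProj 0]; MComp FCD [MProj 1]]))).
Definition strictv p m n :=
  ifz (ifz (n - m) 0 1) 0 (ifz (trv p m n) 0 (ifz (trv p (fcd n) n) 0 (qv p n (fcd m) (fcd n)))).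

Lemma FCDc_ev i l : eval (MComp FCD [MProj i]) l (fcd (nth i l 0)).
Proof. eapply ev_comp; [repeat constructor|apply FCD_ev]. Qed.

Lemma STRICTP_ev p m n : eval (STRICTP p) [m; n] (strictv p m n).
Proof.
  unfold STRICTP, strictv.
  apply And_ev; [apply Lt_ev; apply (ev_proj)|].
  apply And_ev; [eapply ev_comp; [repeat constructor|apply TRP_ev]|].
  apply And_ev; [eapply ev_comp; [constructor; [apply FCDc_ev|repeat constructor]|apply TRP_ev]|].
  eapply ev_comp; [|apply QP_ev].
  constructor; [apply (ev_proj 1)|]. constructor; [apply FCDc_ev|]. constructor; [apply FCDc_ev|constructor].
Qed.

Lemma strictv_spec p m n : strictv p m n <> 0 <-> strict (Qr p) m n.
Proof.
  unfold strictv, strict. rewrite <- !trv_spec, <- qv_spec.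
  destruct (n - m) eqn:E; simpl.
  - split; [lia|]. intros [H _]. lia.
  - destruct (trv p m n); simpl; [split; [lia|intros [_ [H _]]; lia]|].
    destruct (trv p (fcd n) n); simpl; [split; [lia|intros [_ [_ [H _]]]; lia]|].
    split; [intros H; repeat split; auto; lia|intros [_ [_ [_ H]]]; auto].
Qed.

Definition SQP p := Ifz (Eqt (MProj 0) (MProj 1)) (Ifz (STRICTP p) MZero ONE) ONE.

Lemma SQP_ev p x y : eval (SQP p) [x; y] (if Nat.eq_dec x y then 1 else ifz (strictv p x y) 0 1).
Proof.
  eapply ev_eq.
  - apply Ifz_ev; [apply Eqt_ev; apply ev_proj| |apply ONE_ev].
    apply Ifz_ev; [apply STRICTP_ev|constructor|apply ONE_ev].
  - rewrite eqv_spec. simpl. destruct (Nat.eq_dec x y); reflexivity.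
Qed.

Definition TB p := Ifz (And (MComp (STRICTP p) [MProj 1; MProj 0]) (Eqt (MComp FCD [MProj 0]) (MProj 2))) ONE MZero.
Definition PB p := MMu (TB p).

Lemma TB_ev p k n b : eval (TB p) [k; n; b] (ifz (ifz (strictv p n k) 0 (eqv (fcd k) b)) 1 0).
Proof.
  apply Ifz_ev; [|apply ONE_ev|constructor].
  apply And_ev.
  - eapply ev_comp; [repeat constructor|apply STRICTP_ev].
  - apply Eqt_ev; [apply FCDc_ev|apply (ev_proj 2)].
Qed.

Definition TC := Ifz (Eqt (MComp FCD [MProj 2]) (MProj 1)) ONE MZero.
Definition PC := MMu TC.
Lemma TC_ev k a m : eval TC [k; a; m] (ifz (eqv (fcd m) a) 1 0).
Proof. apply Ifz_ev; [|apply ONE_ev|constructor]. apply Eqt_ev; [apply FCDc_ev|apply (ev_proj 1)]. Qed.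

Lemma fcd_le n : fcd n <= n.
Proof. induction n; simpl; auto. destruct (fcd n); simpl; lia. Qed.

Lemma fcd_down j : forall n v, fcd n = v + j -> fcd (n + j) = v.
Proof.
  induction j; intros n v H. rewrite Nat.add_0_r; lia.
  rewrite <- Nat.add_succ_comm. apply IHj. simpl. rewrite H.
  replace (v + S j) with (S (v + j)) by lia. simpl. lia.
Qed.

Lemma fcd_inf a N : exists n, N <= n /\ fcd n = a.
Proof.
  set (n0 := N + a). set (m := n0 + fcd n0).
  assert (Hm : fcd m = 0) by (apply fcd_down; lia).
  assert (Hm1 : fcd (S m) = S m) by (simpl; rewrite Hm; reflexivity).
  exists (S m + (S m - a)). split; [lia|].
  apply fcd_down. rewrite Hm1. unfold m, n0. lia.
Qed.

Lemma Tr_down Q k j u : Tr Q k u -> j <= k -> Tr Q j u.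
Proof. intros H Hj a b c Ha Hb Hc. apply H; lia. Qed.

Lemma Tr_max Q k j u : Tr Q k u -> Tr Q j u -> Tr Q (max k j) u.
Proof. intros. destruct (Nat.max_spec k j) as [[_ ->]|[_ ->]]; auto. Qed.

Definition QOK (prec : nat -> nat -> Prop) (Q : nat -> nat -> nat -> Prop) :=
  transitive_rel prec /\ (forall a c, prec a c <-> exists u, Q u a c) /\
  (forall u u' a c, u <= u' -> Q u a c -> Q u' a c).

Lemma Q_ev prec Q a c : QOK prec Q -> prec a c -> exists U, forall u, U <= u -> Q u a c.
Proof.
  intros [HT [HQ HM]] H. apply HQ in H. destruct H as [u Hu]. exists u. intros; eauto.
Qed.

Lemma Tr_ev prec Q k : QOK prec Q -> exists U, forall u, U <= u -> Tr Q k u.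
Proof.
  intros HO. destruct HO as [HT [HQ HM]] eqn:EO.
  destruct (uniform_bound (fun a t => forall c, c <= k -> prec a c -> Q t a c) (S k)) as [U HU].
  { intros j t t' H Htt c Hc Hp. eapply HM; eauto. }
  { intros a Ha.
    destruct (uniform_bound (fun c t => prec a c -> Q t a c) (S k)) as [U HU].
    { intros j t t' H Htt Hp. eapply HM; eauto. }
    { intros c Hc. destruct (classic (prec a c)) as [Hp|Hp].
      - destruct (proj1 (HQ _ _) Hp) as [u Hu]. eauto.
      - exists 0. tauto. }
    exists U. intros c Hc. apply HU. lia. }
  exists U. intros u Hu a b c Ha Hb Hc H1 H2.
  eapply HM; [exact Hu|]. apply HU; [lia|auto|].
  apply (HT a b c); apply HQ; eauto.
Qed.

Lemma strict_lt Q m n : strict Q m n -> m < n.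
Proof. intros [H _]; auto. Qed.

Lemma strict_trans prec Q m k n : QOK prec Q -> strict Q m k -> strict Q k n -> strict Q m n.
Proof.
  intros [HT [HQ HM]] [H1 [H2 [H3 H4]]] [G1 [G2 [G3 G4]]].
  split; [lia|]. split; [eapply Tr_down; [exact G2|lia]|]. split; auto.
  pose proof (fcd_le m). pose proof (fcd_le k).
  apply (Tr_max Q k (fcd n) n G2 G3 (fcd m) (fcd k) (fcd n)); try lia.
  eapply HM; [|exact H4]; lia. auto.
Qed.

Lemma strict_prec prec Q m n : QOK prec Q -> strict Q m n -> prec (fcd m) (fcd n).
Proof. intros [HT [HQ HM]] [_ [_ [_ H]]]. apply HQ; eauto. Qed.

Lemma ev_pre prec Q m x : QOK prec Q -> prec (fcd m) x ->
  exists N, forall n, N <= n -> m < n /\ Tr Q m n /\ Q n (fcd m) x.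
Proof.
  intros HO Hp. destruct (Q_ev _ _ _ _ HO Hp) as [U1 HU1].
  destruct (Tr_ev _ _ m HO) as [U2 HU2].
  exists (max (S m) (max U1 U2)). intros n Hn. repeat split; [lia|apply HU2; lia|apply HU1; lia].
Qed.

Lemma ev_N prec Q m c : QOK prec Q -> prec (fcd m) c ->
  exists N, forall n, N <= n -> fcd n = c -> strict Q m n.
Proof.
  intros HO Hp. destruct (ev_pre _ _ _ _ HO Hp) as [N1 HN1].
  destruct (Tr_ev _ _ c HO) as [U2 HU2].
  exists (max N1 U2). intros n Hn Hc. destruct (HN1 n ltac:(lia)) as [A [B D]].
  split; auto. split; auto. subst. split; auto. apply HU2; lia.
Qed.

Lemma ev_find prec Q m c N0 : QOK prec Q -> prec (fcd m) c ->
  exists n, N0 <= n /\ fcd n = c /\ strict Q m n.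
Proof.
  intros HO Hp. destruct (ev_N _ _ _ _ HO Hp) as [N HN].
  destruct (fcd_inf c (max N N0)) as [n [Hn Hc]]. exists n. split; [lia|]. split; auto.
  apply HN; auto; lia.
Qed.

Lemma comb prec Q m m' n : QOK prec Q -> strict Q m n -> Tr Q m' n -> m' < n ->
  Q n (fcd m') (fcd m) -> strict Q m' n.
Proof.
  intros HO [H1 [H2 [H3 H4]]] G1 G2 G3. split; auto. split; auto. split; auto.
  pose proof (fcd_le m). pose proof (fcd_le m').
  apply (Tr_max Q (max m' m) (fcd n) n (Tr_max Q m' m n G1 H2) H3 (fcd m') (fcd m) (fcd n)); auto; lia.
Qed.

Definition sqr Q x y := x = y \/ strict Q x y.
Definition Psi (J : nat -> Prop) : nat -> Prop := fun a => exists m, J m /\ fcd m = a.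
Definition Phi Q (I : nat -> Prop) : nat -> Prop := fun m => exists n, strict Q m n /\ I (fcd n).

Lemma sqr_po prec Q : QOK prec Q -> partial_order (sqr Q).
Proof.
  intros HO. split; [left; auto|]. split.
  - intros a b [H|H] [G|G]; auto. apply strict_lt in H. apply strict_lt in G. lia.
  - intros a b c [H|H] [G|G]; subst; unfold sqr; auto. right; eapply strict_trans; eauto.
Qed.

Lemma NP_up Q J : is_ideal (sqr Q) J -> ~ principal (sqr Q) J ->
  forall m, J m -> exists n, J n /\ strict Q m n.
Proof.
  intros [_ [Hl Hd]] Hnp m Hm.
  assert (exists b, J b /\ ~ sqr Q b m) as [b [Hb Hnb]].
  { apply NNPP. intros Hn. apply Hnp. exists m. split; auto. intros b Hb.
    apply NNPP. intros Hc. apply Hn. eauto. }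
  destruct (Hd m b Hm Hb) as [c [Hc [H1 H2]]].
  exists c. split; auto. destruct H1 as [H1|H1]; auto. subst. contradiction.
Qed.

Lemma NP_unb prec Q J : QOK prec Q -> is_ideal (sqr Q) J -> ~ principal (sqr Q) J ->
  forall m, J m -> forall N, exists n, J n /\ strict Q m n /\ N <= n.
Proof.
  intros HO HI Hnp m Hm N. induction N.
  - destruct (NP_up _ _ HI Hnp m Hm) as [n [Hn Hs]]. exists n. split; auto. split; auto. lia.
  - destruct IHN as [n [Hn [Hs HN]]].
    destruct (NP_up _ _ HI Hnp n Hn) as [k [Hk Hs']]. exists k. split; auto.
    split; [eapply strict_trans; eauto|]. apply strict_lt in Hs'. lia.
Qed.

Lemma Psi_ideal prec Q J : QOK prec Q -> is_ideal (sqr Q) J -> ~ principal (sqr Q) J ->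
  is_ideal prec (Psi J).
Proof.
  intros HO HI Hnp. pose proof HI as [[a0 Ha0] [Hl Hd]]. split; [|split].
  - exists (fcd a0). exists a0. auto.
  - intros a b Hp [m [Hm Ha]]. subst a.
    destruct (fcd_inf b 0) as [m' [_ Hm']].
    destruct (ev_pre prec Q m' (fcd m) HO) as [N HN]; [rewrite Hm'; auto|].
    destruct (NP_unb _ _ _ HO HI Hnp m Hm N) as [n [Hn [Hs HNn]]].
    destruct (HN n HNn) as [A [B D]].
    exists m'. split; auto. apply (Hl n m'); auto. right. eapply comb; eauto.
  - intros a b [m [Hm Ha]] [m' [Hm' Hb]]. subst.
    destruct (Hd m m' Hm Hm') as [c [Hc [H1 H2]]].
    destruct (NP_up _ _ HI Hnp c Hc) as [n [Hn Hs]].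
    assert (S1 : strict Q m n) by (destruct H1 as [H1|H1]; [subst; auto|eapply strict_trans; eauto]).
    assert (S2 : strict Q m' n) by (destruct H2 as [H2|H2]; [subst; auto|eapply strict_trans; eauto]).
    exists (fcd n). split; [exists n; auto|].
    split; eapply strict_prec; eauto.
Qed.

Lemma Phi_of prec Q I a m : QOK prec Q -> is_ideal prec I -> I a -> fcd m = a -> Phi Q I m.
Proof.
  intros HO [_ [Hl Hd]] Ha Hm. destruct (Hd a a Ha Ha) as [c [Hc [Hp _]]].
  destruct (ev_find prec Q m c 0 HO) as [n [_ [Hn Hs]]]; [rewrite Hm; auto|].
  exists n. split; auto. rewrite Hn; auto.
Qed.

Lemma Phi_up2 prec Q I m m' : QOK prec Q -> is_ideal prec I -> Phi Q I m -> Phi Q I m' ->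
  exists k, Phi Q I k /\ strict Q m k /\ strict Q m' k.
Proof.
  intros HO HI [n [Hs Hn]] [n' [Hs' Hn']]. pose proof HI as [_ [Hl Hd]].
  pose proof HO as [HT _].
  destruct (Hd _ _ Hn Hn') as [d [Hdd [P1 P2]]].
  assert (Q1 : prec (fcd m) d) by (eapply HT; [eapply strict_prec; eauto|auto]).
  assert (Q2 : prec (fcd m') d) by (eapply HT; [eapply strict_prec; eauto|auto]).
  destruct (ev_N _ _ _ _ HO Q1) as [N1 HN1]. destruct (ev_N _ _ _ _ HO Q2) as [N2 HN2].
  destruct (fcd_inf d (max N1 N2)) as [k [Hk Hkd]].
  exists k. split; [|split; [apply HN1|apply HN2]; auto; lia].
  eapply Phi_of; eauto.
Qed.

Lemma Phi_ideal prec Q I : QOK prec Q -> is_ideal prec I ->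
  is_ideal (sqr Q) (Phi Q I) /\ ~ principal (sqr Q) (Phi Q I).
Proof.
  intros HO HI. pose proof HI as [[a Ha] [Hl Hd]]. split; [split; [|split]|].
  - destruct (fcd_inf a 0) as [m [_ Hm]]. exists m. eapply Phi_of; eauto.
  - intros x y [H|H] Hx; [subst; auto|]. destruct Hx as [n [Hs Hn]].
    exists n. split; auto. eapply strict_trans; eauto.
  - intros x y Hx Hy. destruct (Phi_up2 _ _ _ _ _ HO HI Hx Hy) as [k [Hk [A B]]].
    exists k. split; auto. split; right; auto.
  - intros [x [Hx Hmax]]. destruct (Phi_up2 _ _ _ _ _ HO HI Hx Hx) as [k [Hk [A _]]].
    destruct (Hmax k Hk) as [E|E].
    + subst. apply strict_lt in A. lia.
    + apply strict_lt in A. apply strict_lt in E. lia.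
Qed.

Lemma Psi_Phi prec Q I : QOK prec Q -> is_ideal prec I -> forall a, Psi (Phi Q I) a <-> I a.
Proof.
  intros HO HI a. split.
  - intros [m [[n [Hs Hn]] Hm]]. subst. pose proof HI as [_ [Hl _]].
    eapply Hl; [|exact Hn]. eapply strict_prec; eauto.
  - intros Ha. destruct (fcd_inf a 0) as [m [_ Hm]]. exists m. split; auto. eapply Phi_of; eauto.
Qed.

Lemma Phi_Psi prec Q J : QOK prec Q -> is_ideal (sqr Q) J -> ~ principal (sqr Q) J ->
  forall m, Phi Q (Psi J) m <-> J m.
Proof.
  intros HO HI Hnp m. split.
  - intros [n [Hs [n' [Hn' Hf]]]].
    assert (Hp : prec (fcd m) (fcd n')) by (rewrite Hf; eapply strict_prec; eauto).
    destruct (ev_pre _ _ _ _ HO Hp) as [N HN].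
    destruct (NP_unb _ _ _ HO HI Hnp n' Hn' N) as [k [Hk [Hs' HNk]]].
    destruct (HN k HNk) as [A [B D]].
    pose proof HI as [_ [Hl _]]. apply (Hl k m); auto. right. eapply comb; eauto.
  - intros Hm. destruct (NP_up _ _ HI Hnp m Hm) as [n [Hn Hs]].
    exists n. split; auto. exists n; auto.
Qed.

Lemma cont_of_basis {X Y : Type} (beta : nat -> X -> Prop) (gamma : nat -> Y -> Prop) (f : X -> Y)
  (Bm : nat -> nat -> Prop) :
  (forall n x, gamma n (f x) <-> exists m, Bm n m /\ beta m x) -> continuous_map beta gamma f.
Proof.
  intros H V HV x Vfx. destruct (HV (f x) Vfx) as [ns [H1 H2]].
  assert (exists ms, (forall m, In m ms -> beta m x) /\
            (forall y, (forall m, In m ms -> beta m y) -> forall n, In n ns -> gamma n (f y)))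
    as [ms [A B]].
  { clear H2. induction ns as [|n ns IH].
    - exists []. split; intros; simpl in *; tauto.
    - destruct IH as [ms [A B]]. { intros; apply H1; simpl; auto. }
      destruct (proj1 (H n x) (H1 n (or_introl eq_refl))) as [m [Hm Hb]].
      exists (m :: ms). split.
      + intros m' [E|E]; subst; auto.
      + intros y Hy n' [E|E].
        * subst. apply H. exists m. split; auto. apply Hy. left; auto.
        * apply B; auto. intros; apply Hy; right; auto. }
  exists ms. split; [auto|]. intros y Hy. apply H2. apply B; auto.
Qed.

Lemma sig_ext {A : Type} {P : A -> Prop} (x y : sig P) : proj1_sig x = proj1_sig y -> x = y.
Proof. destruct x, y; simpl; intros; subst; f_equal; apply proof_irrelevance. Qed.

Lemma least_zero (g : nat -> nat) k : g k = 0 -> exists j, g j = 0 /\ forall i, i < j -> g i <> 0.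
Proof.
  revert k. induction k as [k IH] using (well_founded_induction lt_wf). intros Hk.
  destruct (classic (exists i, i < k /\ g i = 0)) as [[i [Hi Hg]]|Hn].
  - apply (IH i Hi Hg).
  - exists k. split; auto. intros i Hi E. apply Hn; eauto.
Qed.

Lemma QOK_run prec p : transitive_rel prec ->
  (forall a b, prec a b <-> exists y, eval p [a; b] y) -> QOK prec (Qr p).
Proof.
  intros HT Hp. split; auto. split.
  - intros a c. rewrite Hp. unfold Qr. split.
    + intros [y Hy]. destruct (run_complete _ _ _ Hy) as [t Ht]. exists t. congruence.
    + intros [u Hu]. destruct (run p u [a; c]) eqn:E; [|congruence].
      exists n. eapply run_sound; eauto.
  - intros u u' a c Hu H. unfold Qr in *. destruct (run p u [a; c]) eqn:E; [|congruence].
    rewrite (run_mono _ _ _ _ _ Hu E). congruence.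
Qed.

Lemma eqv01 a b : eqv a b <> 0 <-> a = b.
Proof. rewrite eqv_spec. destruct (Nat.eq_dec a b); split; congruence. Qed.

Theorem proposition3 :
  forall prec : nat -> nat -> Prop,
    transitive_rel prec -> ce_rel prec ->
    exists sq : nat -> nat -> Prop,
      partial_order sq /\ computable_rel sq /\
      computably_homeomorphic (ideal_basis prec) (npideal_basis sq).
Proof.
  intros prec HT [p Hp].
  pose proof (QOK_run prec p HT Hp) as HO.
  set (Q := Qr p).
  exists (sqr Q). split; [eapply sqr_po; eauto|]. split.
  { exists (SQP p). intros a b. split.
    - intros H. eapply ev_eq; [apply SQP_ev|].
      destruct (Nat.eq_dec a b); auto. destruct H as [H|H]; [contradiction|].
      apply strictv_spec in H. destruct (strictv p a b); [congruence|reflexivity].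
    - intros H. eapply ev_eq; [apply SQP_ev|].
      destruct (Nat.eq_dec a b); [exfalso; apply H; left; auto|].
      destruct (strictv p a b) eqn:E; [reflexivity|].
      exfalso. apply H. right. apply strictv_spec. congruence. }
  set (f := fun (I : Ideals prec) =>
        exist (fun J => is_ideal (sqr Q) J /\ ~ principal (sqr Q) J)
          (Phi Q (proj1_sig I)) (Phi_ideal prec Q _ HO (proj2_sig I)) : NPIdeals (sqr Q)).
  set (g := fun (J : NPIdeals (sqr Q)) =>
        exist (fun I => is_ideal prec I)
          (Psi (proj1_sig J)) (Psi_ideal prec Q _ HO (proj1 (proj2_sig J)) (proj2 (proj2_sig J)))
          : Ideals prec).
  assert (Hf : forall n x, npideal_basis (sqr Q) n (f x) <->
             exists m, (exists k, strict Q n k /\ fcd k = m) /\ ideal_basis prec m x).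
  { intros n [I HI]. unfold npideal_basis, ideal_basis, f; simpl. unfold Phi. split.
    - intros [k [Hs Hk]]. exists (fcd k). eauto.
    - intros [m [[k [Hs Hk]] Hm]]. subst. eauto. }
  assert (Hg : forall a J, ideal_basis prec a (g J) <->
             exists m, fcd m = a /\ npideal_basis (sqr Q) m J).
  { intros a [J HJ]. unfold npideal_basis, ideal_basis, g; simpl. unfold Psi. split.
    - intros [m [Hm Ha]]. eauto.
    - intros [m [Ha Hm]]. eauto. }
  exists f, g. split; [|split; [|split; [|split; [|split]]]].
  - intros [I HI]. apply sig_ext. simpl. extensionality a. apply propositional_extensionality.
    apply Psi_Phi with prec; auto.
  - intros [J [HJ HJn]]. apply sig_ext. simpl. extensionality m. apply propositional_extensionality.
    apply Phi_Psi with prec; auto.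
  - eapply cont_of_basis. exact Hf.
  - eapply cont_of_basis with (Bm := fun a m => fcd m = a). exact Hg.
  - exists (fun n m => exists k, strict Q n k /\ fcd k = m). split; [|exact Hf].
    exists (PB p). intros n b.
    set (tbv := fun j => ifz (ifz (strictv p n j) 0 (eqv (fcd j) b)) 1 0).
    assert (Htb : forall j, tbv j = 0 <-> strict Q n j /\ fcd j = b).
    { intros j. unfold tbv, Q. rewrite <- strictv_spec, eqv_spec.
      destruct (strictv p n j); simpl.
      - split; intros H; [discriminate H|destruct H as [A _]; congruence].
      - destruct (Nat.eq_dec (fcd j) b); simpl; split; intros H; try discriminate H; auto.
        destruct H; congruence. }
    split.
    + intros [k Hk]. apply Htb in Hk. destruct (least_zero tbv k Hk) as [j [Hj Hlt]].
      exists j. constructor.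
      * eapply ev_eq; [apply TB_ev|]. exact Hj.
      * intros i Hi. specialize (Hlt i Hi). exists (pred (tbv i)).
        eapply ev_eq; [apply TB_ev|]. fold (tbv i). lia.
    + intros [y Hy]. apply inv_mu in Hy. destruct Hy as [Hy _].
      pose proof (eval_det _ _ _ _ Hy (TB_ev p y n b)) as E.
      exists y. apply Htb. symmetry. exact E.
  - exists (fun a m => fcd m = a). split; [|exact Hg].
    exists PC. intros a m. split.
    + intros H. exists 0. constructor; [|intros; lia].
      eapply ev_eq; [apply TC_ev|]. rewrite H, eqv_spec. destruct (Nat.eq_dec a a); [reflexivity|congruence].
    + intros [y Hy]. apply inv_mu in Hy. destruct Hy as [Hy _].
      pose proof (eval_det _ _ _ _ Hy (TC_ev y a m)) as E.
      apply eqv01. intros Z. rewrite Z in E. discriminate.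
Qed.
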